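(* Let $a\in C^2([0,T]\times[-\pi,\pi])$ solve $$\partial_t a+\Big(\int_{-\pi}^x a(t,\bar x)\,d\bar x\Big)\partial_x a-a^2+\frac1\pi\int_{-\pi}^{\pi}a^2\,dx=0,\qquad \int_{-\pi}^\pi a(t,x)dx=0,$$ and set $a_0=a(0,\cdot)$. Assume $\partial_x a_0(x_0^* )=0$ at some point $x_0^*$. Then for all $t\in[0,T]$, $\partial_x^2a(t,x^*(t))=\partial_x^2a_0(x_0^* )$, where $x^*$ is the characteristic starting from $x_0^*$.
   Context: The characteristic starting from $x_0^*$ is the solution of $\frac{d}{dt}x^*(t)=\int_{-\pi}^{x^*(t)}a(t,x)\,dx$, $x^*(0)=x_0^*$. *)

(* Defs.v *)
From Stdlib Require Import Reals.
From Coquelicot Require Import Coquelicot.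
Open Scope R_scope.

Definition Icc (lo hi : R) (x : R) : Prop := lo <= x <= hi.

Definition Rect (T : R) (p : R * R) : Prop :=
  0 <= fst p <= T /\ - PI <= snd p <= PI.

(* f has derivative l at x relative to the set D (one-sided at endpoints
   of a closed interval): the difference quotient tends to l as y -> x
   with y in D, y <> x. *)
Definition is_derive_in (D : R -> Prop) (f : R -> R) (x l : R) : Prop :=
  filterlim (fun y => (f y - f x) / (y - x))
    (within (fun y => D y /\ y <> x) (locally x)) (locally l).

Definition cont_on2 (D : R * R -> Prop) (f : R -> R -> R) : Prop :=
  forall p, D p ->
    filterlim (fun q : R * R => f (fst q) (snd q)) (within D (locally p))
      (locally (f (fst p) (snd p))).

(* a is C^2 on the closed rectangle [0,T] x [-pi,pi], with partial derivatives
   a_t = at, a_x = ax, (a_t)_t = att, (a_t)_x = atx, (a_x)_t = axt,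
   (a_x)_x = axx, all continuous up to the boundary (derivatives taken
   relative to the closed rectangle). *)
Definition C2_rect (T : R) (a at_ ax att atx axt axx : R -> R -> R) : Prop :=
  cont_on2 (Rect T) a /\ cont_on2 (Rect T) at_ /\ cont_on2 (Rect T) ax /\
  cont_on2 (Rect T) att /\ cont_on2 (Rect T) atx /\
  cont_on2 (Rect T) axt /\ cont_on2 (Rect T) axx /\
  (forall t x, Rect T (t, x) ->
     is_derive_in (Icc 0 T) (fun s => a s x) t (at_ t x) /\
     is_derive_in (Icc (- PI) PI) (fun y => a t y) x (ax t x) /\
     is_derive_in (Icc 0 T) (fun s => at_ s x) t (att t x) /\
     is_derive_in (Icc (- PI) PI) (fun y => at_ t y) x (atx t x) /\
     is_derive_in (Icc 0 T) (fun s => ax s x) t (axt t x) /\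
     is_derive_in (Icc (- PI) PI) (fun y => ax t y) x (axx t x)).

(* Main.v *)
Require Import Defs.
From Stdlib Require Import Reals Lra Classical ClassicalEpsilon.
From Coquelicot Require Import Coquelicot.
Open Scope R_scope.

Lemma ballR (x e y : R) : ball x e y <-> Rabs (y - x) < e.
Proof. reflexivity. Qed.

Definition Lim (lo hi : R) (f : R -> R) (x l : R) :=
  forall eps, 0 < eps -> exists d, 0 < d /\ forall y, lo <= y <= hi -> y <> x ->
    Rabs (y - x) < d -> Rabs (f y - l) < eps.

Lemma Lim_filterlim lo hi f x l :
  Lim lo hi f x l <-> filterlim f (within (fun y => Icc lo hi y /\ y <> x) (locally x)) (locally l).
Proof.
split.
- intros H P [eps HP]. destruct (H eps (cond_pos eps)) as [d [Hd H']].
  exists (mkposreal d Hd). intros y Hy [Hy1 Hy2]. apply HP. apply ballR. apply H'; auto.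
- intros H eps He.
  assert (H1 := H (fun z => Rabs (z - l) < eps)).
  destruct H1 as [d Hd].
  + exists (mkposreal eps He). intros z Hz. apply ballR in Hz. exact Hz.
  + exists d. split. apply cond_pos. intros y Hy Hyx Hd'. apply (Hd y). apply ballR. exact Hd'. split; auto.
Qed.

Lemma Lim_plus lo hi f g x a b : Lim lo hi f x a -> Lim lo hi g x b ->
  Lim lo hi (fun y => f y + g y) x (a + b).
Proof.
rewrite !Lim_filterlim. intros Hf Hg.
apply (filterlim_comp_2 f g Rplus Hf Hg). apply (@filterlim_plus R_AbsRing R_NormedModule).
Qed.

Lemma Lim_mult lo hi f g x a b : Lim lo hi f x a -> Lim lo hi g x b ->
  Lim lo hi (fun y => f y * g y) x (a * b).
Proof.
rewrite !Lim_filterlim. intros Hf Hg.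
apply (filterlim_comp_2 f g Rmult Hf Hg). apply (@filterlim_mult R_AbsRing).
Qed.

Lemma Lim_const lo hi c x : Lim lo hi (fun _ => c) x c.
Proof. intros e He. exists 1. split. lra. intros. rewrite Rminus_eq_0, Rabs_R0. lra. Qed.

Lemma Lim_opp lo hi f x a : Lim lo hi f x a -> Lim lo hi (fun y => - f y) x (- a).
Proof.
intros H e He. destruct (H e He) as [d [Hd H']]. exists d. split. auto.
intros y H1 H2 H3. replace (- f y - - a) with (- (f y - a)) by ring. rewrite Rabs_Ropp. auto.
Qed.

Lemma Lim_minus lo hi f g x a b : Lim lo hi f x a -> Lim lo hi g x b ->
  Lim lo hi (fun y => f y - g y) x (a - b).
Proof. intros. apply Lim_plus; auto. apply Lim_opp; auto. Qed.

Lemma Lim_ext lo hi f g x a : (forall y, lo <= y <= hi -> y <> x -> f y = g y) ->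
  Lim lo hi f x a -> Lim lo hi g x a.
Proof.
intros E H e He. destruct (H e He) as [d [Hd H']]. exists d. split. auto.
intros y H1 H2 H3. rewrite <- E; auto.
Qed.

Lemma Lim_unique lo hi f x a b : lo < hi -> lo <= x <= hi ->
  Lim lo hi f x a -> Lim lo hi f x b -> a = b.
Proof.
intros Hlh Hx Ha Hb. destruct (Req_dec a b) as [E|N]; auto. exfalso.
assert (He : 0 < Rabs (a - b) / 2). { apply Rdiv_lt_0_compat; [apply Rabs_pos_lt; lra | lra]. }
destruct (Ha _ He) as [d1 [Hd1 H1]]. destruct (Hb _ He) as [d2 [Hd2 H2]].
set (d := Rmin d1 d2).
assert (Hd : 0 < d) by (apply Rmin_pos; auto).
assert (exists y, lo <= y <= hi /\ y <> x /\ Rabs (y - x) < d) as [y [Hy1 [Hy2 Hy3]]].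
{ destruct (Rlt_or_le x hi) as [L|L].
  - exists (x + Rmin d (hi - x) / 2).
    assert (0 < Rmin d (hi - x)) by (apply Rmin_pos; lra).
    assert (Rmin d (hi - x) <= d) by apply Rmin_l.
    assert (Rmin d (hi - x) <= hi - x) by apply Rmin_r.
    split. lra. split. lra. rewrite Rabs_pos_eq; lra.
  - exists (x - Rmin d (x - lo) / 2).
    assert (0 < Rmin d (x - lo)) by (apply Rmin_pos; lra).
    assert (Rmin d (x - lo) <= d) by apply Rmin_l.
    assert (Rmin d (x - lo) <= x - lo) by apply Rmin_r.
    split. lra. split. lra. rewrite Rabs_minus_sym, Rabs_pos_eq; lra. }
assert (d <= d1) by apply Rmin_l. assert (d <= d2) by apply Rmin_r.
specialize (H1 y Hy1 Hy2 ltac:(lra)). specialize (H2 y Hy1 Hy2 ltac:(lra)).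
assert (Rabs (a - b) <= Rabs (f y - a) + Rabs (f y - b)).
{ replace (a - b) with (- (f y - a) + (f y - b)) by ring.
  eapply Rle_trans. apply Rabs_triang. rewrite Rabs_Ropp. lra. }
lra.
Qed.

Definition DerIn lo hi f x l := Lim lo hi (fun y => (f y - f x) / (y - x)) x l.

Lemma DerIn_equiv lo hi f x l : is_derive_in (Icc lo hi) f x l <-> DerIn lo hi f x l.
Proof. unfold DerIn. rewrite Lim_filterlim. reflexivity. Qed.

Lemma Lim_id lo hi x : Lim lo hi (fun y => y) x x.
Proof. intros e He. exists e. split; auto. Qed.

Lemma Lim_restr lo hi lo' hi' f x l : lo <= lo' -> hi' <= hi -> Lim lo hi f x l -> Lim lo' hi' f x l.
Proof.
intros H1 H2 H e He. destruct (H e He) as [d [Hd H']]. exists d. split; auto.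
intros y Hy. apply H'. lra.
Qed.

Lemma DerIn_cont lo hi f x l : DerIn lo hi f x l -> Lim lo hi f x (f x).
Proof.
intros H.
assert (H2 : Lim lo hi (fun y => f x + (y - x) * ((f y - f x) / (y - x))) x (f x + (x - x) * l)).
{ apply Lim_plus. apply Lim_const. apply Lim_mult. apply Lim_minus. apply Lim_id. apply Lim_const. exact H. }
replace (f x + (x - x) * l) with (f x) in H2 by ring.
revert H2. apply Lim_ext. intros y _ Hy. field. lra.
Qed.

Lemma clamp_prop u v y z : u <= v -> u <= z <= v ->
  u <= Rmax u (Rmin v y) <= v /\ Rabs (Rmax u (Rmin v y) - z) <= Rabs (y - z).
Proof.
intros. unfold Rmax, Rmin. repeat destruct Rle_dec; split_Rabs; lra.
Qed.

Lemma DerIn_plus lo hi f g x a b : DerIn lo hi f x a -> DerIn lo hi g x b ->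
  DerIn lo hi (fun y => f y + g y) x (a + b).
Proof.
intros Hf Hg. unfold DerIn. eapply Lim_ext; [|apply (Lim_plus _ _ _ _ _ _ _ Hf Hg)].
intros y _ Hy. simpl. field. lra.
Qed.

Lemma DerIn_minus lo hi f g x a b : DerIn lo hi f x a -> DerIn lo hi g x b ->
  DerIn lo hi (fun y => f y - g y) x (a - b).
Proof.
intros Hf Hg. unfold DerIn. eapply Lim_ext; [|apply (Lim_minus _ _ _ _ _ _ _ Hf Hg)].
intros y _ Hy. simpl. field. lra.
Qed.

Lemma DerIn_mult lo hi f g x a b : DerIn lo hi f x a -> DerIn lo hi g x b ->
  DerIn lo hi (fun y => f y * g y) x (f x * b + g x * a).
Proof.
intros Hf Hg. unfold DerIn.
assert (H := Lim_plus _ _ _ _ _ _ _ (Lim_mult _ _ _ _ _ _ _ (DerIn_cont _ _ _ _ _ Hf) Hg)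
   (Lim_mult _ _ _ _ _ _ _ (Lim_const lo hi (g x) x) Hf)).
eapply Lim_ext; [|apply H].
intros y _ Hy. simpl. field. lra.
Qed.

Lemma DerIn_of_derivable lo hi f x l : derivable_pt_lim f x l -> DerIn lo hi f x l.
Proof.
intros H e He. destruct (H e He) as [d Hd]. exists d. split. apply cond_pos.
intros y _ Hy Hyd. specialize (Hd (y - x) ltac:(lra) Hyd).
replace (x + (y - x)) with y in Hd by ring. exact Hd.
Qed.

Lemma MVT_lt lo hi f df u v : lo <= u -> u < v -> v <= hi ->
  (forall z, u <= z <= v -> DerIn lo hi f z (df z)) ->
  exists c, u <= c <= v /\ f v - f u = df c * (v - u).
Proof.
intros Hu Huv Hv Hd.
set (g := fun z => f (Rmax u (Rmin v z))).
assert (Eg : forall z, u <= z <= v -> g z = f z).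
{ intros z Hz. unfold g. f_equal. unfold Rmax, Rmin. repeat destruct Rle_dec; lra. }
destruct (MVT_gen g u v df) as [c [Hc Ec]].
- rewrite Rmin_left, Rmax_right by lra. intros z Hz.
  apply is_derive_Reals. intros e He.
  destruct (Hd z ltac:(lra) e He) as [d [Hd0 Hd1]].
  assert (Hm : 0 < Rmin d (Rmin (z - u) (v - z))) by (repeat apply Rmin_pos; lra).
  exists (mkposreal _ Hm). intros h Hh0 Hh. simpl in Hh.
  assert (Rmin d (Rmin (z - u) (v - z)) <= d) by apply Rmin_l.
  assert (Rmin d (Rmin (z - u) (v - z)) <= Rmin (z - u) (v - z)) by apply Rmin_r.
  assert (Rmin (z - u) (v - z) <= z - u) by apply Rmin_l.
  assert (Rmin (z - u) (v - z) <= v - z) by apply Rmin_r.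
  assert (Habs : - Rabs h <= h <= Rabs h) by (split_Rabs; lra).
  rewrite !Eg by lra.
  specialize (Hd1 (z + h) ltac:(lra) ltac:(lra)).
  replace (z + h - z) with h in Hd1 by ring. apply Hd1. lra.
- rewrite Rmin_left, Rmax_right by lra. intros z Hz.
  apply continuity_pt_filterlim. intros P [e HP].
  assert (Hc := DerIn_cont _ _ _ _ _ (Hd z Hz) e (cond_pos e)).
  destruct Hc as [d [Hd0 Hd1]].
  exists (mkposreal d Hd0). intros y Hy. apply HP. apply ballR. apply ballR in Hy. simpl in Hy.
  destruct (clamp_prop u v y z ltac:(lra) Hz) as [C1 C2].
  rewrite (Eg z Hz). unfold g.
  destruct (Req_dec (Rmax u (Rmin v y)) z) as [E|N].
  + rewrite E, Rminus_eq_0, Rabs_R0. apply cond_pos.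
  + apply Hd1; [lra | exact N | ]. assert (Hy2 : Rabs (y - z) < d) by exact Hy. lra.
- rewrite Rmin_left, Rmax_right in Hc by lra. exists c. split; auto.
  rewrite <- (Eg u), <- (Eg v) by lra. exact Ec.
Qed.

Lemma MVT_in lo hi f df u v : lo <= u <= hi -> lo <= v <= hi ->
  (forall z, Rmin u v <= z <= Rmax u v -> DerIn lo hi f z (df z)) ->
  exists c, Rmin u v <= c <= Rmax u v /\ f v - f u = df c * (v - u).
Proof.
intros Hu Hv Hd. destruct (Rtotal_order u v) as [L|[E|G]].
- rewrite Rmin_left, Rmax_right in * by lra. apply (MVT_lt lo hi); auto; lra.
- subst. exists v. rewrite Rmin_left, Rmax_left by lra. split. lra. ring.
- rewrite Rmin_right, Rmax_left in * by lra.
  destruct (MVT_lt lo hi f df v u) as [c [Hc Ec]]; try lra; auto.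
  exists c. split; auto. lra.
Qed.
Definition Cont2 T (f : R -> R -> R) := forall t x, Rect T (t, x) ->
  forall eps, 0 < eps -> exists d, 0 < d /\ forall s y, Rect T (s, y) ->
    Rabs (s - t) < d -> Rabs (y - x) < d -> Rabs (f s y - f t x) < eps.

Lemma cont_on2_Cont2 T f : cont_on2 (Rect T) f -> Cont2 T f.
Proof.
intros H t x Htx e He.
destruct (H (t, x) Htx (fun z => Rabs (z - f t x) < e)) as [d Hd].
- exists (mkposreal e He). intros z Hz. exact Hz.
- exists d. split. apply cond_pos. intros s y Hsy H1 H2.
  apply (Hd (s, y)); auto. split; assumption.
Qed.

Lemma UC T f : Cont2 T f -> forall eps, 0 < eps -> exists d, 0 < d /\
  forall s y s' y', Rect T (s, y) -> Rect T (s', y') -> Rabs (s - s') < d -> Rabs (y - y') < d ->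
  Rabs (f s y - f s' y') < eps.
Proof.
intros H e He.
assert (G : forall u v, exists d : posreal, Rect T (u, v) -> forall s y, Rect T (s, y) ->
    Rabs (s - u) < 2 * d -> Rabs (y - v) < 2 * d -> Rabs (f s y - f u v) < e / 2).
{ intros u v. destruct (classic (Rect T (u, v))) as [R1|R1].
  - destruct (H u v R1 (e / 2) ltac:(lra)) as [d [Hd Hd']].
    assert (Hd2 : 0 < d / 2) by lra. exists (mkposreal _ Hd2). intros _ s y Hsy H1 H2.
    simpl in H1, H2. apply Hd'; auto; lra.
  - exists (mkposreal 1 Rlt_0_1). intros C. contradiction. }
set (delta := fun u v => proj1_sig (constructive_indefinite_description _ (G u v))).
assert (Hdelta : forall u v, Rect T (u, v) -> forall s y, Rect T (s, y) ->
    Rabs (s - u) < 2 * delta u v -> Rabs (y - v) < 2 * delta u v -> Rabs (f s y - f u v) < e / 2).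
{ intros u v. unfold delta. destruct (constructive_indefinite_description _ (G u v)) as [d Hd]. exact Hd. }
destruct (compactness_value_2d 0 T (- PI) PI delta) as [d Hd].
exists d. split. apply cond_pos. intros s y s' y' R1 R2 H1 H2.
apply NNPP. intro NG. apply (Hd s y (proj1 R1) (proj2 R1)). intros [u [v [Hu [Hv [Hsu [Hyv Hdd]]]]]].
apply NG.
assert (0 < delta u v) by apply cond_pos.
assert (Ruv : Rect T (u, v)) by (split; assumption).
assert (A1 := Hdelta u v Ruv s y R1 ltac:(lra) ltac:(lra)).
assert (Rabs (s' - u) < 2 * delta u v).
{ replace (s' - u) with ((s - u) - (s - s')) by ring. eapply Rle_lt_trans. apply Rabs_triang.
  rewrite Rabs_Ropp. lra. }
assert (Rabs (y' - v) < 2 * delta u v).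
{ replace (y' - v) with ((y - v) - (y - y')) by ring. eapply Rle_lt_trans. apply Rabs_triang.
  rewrite Rabs_Ropp. lra. }
assert (A2 := Hdelta u v Ruv s' y' R2 ltac:(lra) ltac:(lra)).
replace (f s y - f s' y') with ((f s y - f u v) - (f s' y' - f u v)) by ring.
eapply Rle_lt_trans. apply Rabs_triang. rewrite Rabs_Ropp. lra.
Qed.

Lemma Bound2 T f : Cont2 T f -> exists M, forall s y, Rect T (s, y) -> Rabs (f s y) <= M.
Proof.
intros H.
assert (G : forall p : Compactness.Tn 2 R, exists d : posreal,
   Rect T (fst p, fst (snd p)) -> forall s y, Rect T (s, y) ->
    Rabs (s - fst p) < d -> Rabs (y - fst (snd p)) < d -> Rabs (f s y - f (fst p) (fst (snd p))) < 1).
{ intros p. destruct (classic (Rect T (fst p, fst (snd p)))) as [R1|R1].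
  - destruct (H _ _ R1 1 Rlt_0_1) as [d [Hd Hd']].
    exists (mkposreal _ Hd). intros _. exact Hd'.
  - exists (mkposreal 1 Rlt_0_1). intros C. contradiction. }
set (delta := fun p => proj1_sig (constructive_indefinite_description _ (G p))).
assert (Hdelta : forall p, Rect T (fst p, fst (snd p)) -> forall s y, Rect T (s, y) ->
    Rabs (s - fst p) < delta p -> Rabs (y - fst (snd p)) < delta p -> Rabs (f s y - f (fst p) (fst (snd p))) < 1).
{ intros p. unfold delta. destruct (constructive_indefinite_description _ (G p)) as [d Hd]. exact Hd. }
assert (L := compactness_list 2 (0, (- PI, tt)) (T, (PI, tt)) delta).
apply NNPP. intro NG. apply L. intros [l Hl]. apply NG.
exists (List.fold_right (fun p acc => Rabs (f (fst p) (fst (snd p))) + 1 + acc) 0 l).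
assert (Hle : forall p, List.In p l -> Rabs (f (fst p) (fst (snd p))) + 1 <=
   List.fold_right (fun p acc => Rabs (f (fst p) (fst (snd p))) + 1 + acc) 0 l).
{ clear. induction l as [|q l IH]; simpl. intros p [].
  assert (Pos : 0 <= List.fold_right (fun p acc => Rabs (f (fst p) (fst (snd p))) + 1 + acc) 0 l).
  { clear. induction l; simpl. lra. assert (0 <= Rabs (f (fst a) (fst (snd a)))) by apply Rabs_pos. lra. }
  intros p [E|I]. subst. lra. specialize (IH p I). assert (0 <= Rabs (f (fst q) (fst (snd q)))) by apply Rabs_pos. lra. }
intros s y [Hs Hy].
destruct (Hl (s, (y, tt))) as [[u [v []]] [Hin [Hb Hc]]].
{ simpl. tauto. }
simpl in Hb, Hc.
assert (Ruv : Rect T (u, v)) by (split; simpl; tauto).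
assert (A := Hdelta (u, (v, tt)) Ruv s y (conj Hs Hy) ltac:(simpl; tauto) ltac:(simpl; tauto)).
specialize (Hle _ Hin). simpl in A, Hle.
assert (Rabs (f s y) <= Rabs (f s y - f u v) + Rabs (f u v)).
{ replace (f s y) with ((f s y - f u v) + f u v) at 1 by ring. apply Rabs_triang. }
lra.
Qed.
Definition Cont1 lo hi (f : R -> R) := forall x, lo <= x <= hi -> forall eps, 0 < eps ->
  exists d, 0 < d /\ forall y, lo <= y <= hi -> Rabs (y - x) < d -> Rabs (f y - f x) < eps.

Lemma ex_RInt_in lo hi f u v : lo <= hi -> Cont1 lo hi f -> lo <= u <= hi -> lo <= v <= hi ->
  ex_RInt f u v.
Proof.
intros Hlh Hf Hu Hv.
set (g := fun z => f (Rmax lo (Rmin hi z))).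
apply (ex_RInt_ext g).
{ intros x Hx. unfold g. f_equal.
  assert (Rmin u v <= x <= Rmax u v) by lra.
  assert (lo <= Rmin u v) by (unfold Rmin; destruct Rle_dec; lra).
  assert (Rmax u v <= hi) by (unfold Rmax; destruct Rle_dec; lra).
  rewrite (Rmin_right hi x) by lra. rewrite Rmax_right by lra. reflexivity. }
apply (@ex_RInt_continuous R_CompleteNormedModule). intros z _.
intros P [e HP].
set (z' := Rmax lo (Rmin hi z)).
assert (Hz' : lo <= z' <= hi) by (unfold z', Rmax, Rmin; repeat destruct Rle_dec; lra).
destruct (Hf z' Hz' e (cond_pos e)) as [d [Hd Hd']].
exists (mkposreal d Hd). intros y Hy. apply HP. apply ballR.
assert (Hy2 : Rabs (y - z) < d) by exact Hy.
unfold g. fold z'.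
assert (Rabs (Rmax lo (Rmin hi y) - z') <= Rabs (y - z)).
{ unfold z', Rmax, Rmin. repeat destruct Rle_dec; split_Rabs; lra. }
apply Hd'. unfold Rmax, Rmin; repeat destruct Rle_dec; lra. lra.
Qed.

Lemma RInt_approx lo hi f u v c e : lo <= hi -> Cont1 lo hi f -> lo <= u <= hi -> lo <= v <= hi ->
  (forall z, Rmin u v <= z <= Rmax u v -> Rabs (f z - c) <= e) ->
  Rabs (RInt f u v - (v - u) * c) <= Rabs (v - u) * e.
Proof.
intros Hlh Hf Hu Hv Hb.
assert (K : forall u v, lo <= u <= hi -> lo <= v <= hi -> u <= v ->
  (forall z, u <= z <= v -> Rabs (f z - c) <= e) ->
  Rabs (RInt f u v - (v - u) * c) <= (v - u) * e).
{ clear u v Hu Hv Hb. intros u v Hu Hv Huv Hb.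
  assert (Ex : ex_RInt f u v) by (apply (ex_RInt_in lo hi); auto).
  assert (E : RInt f u v - (v - u) * c = RInt (fun z => f z - c) u v).
  { assert (H := RInt_minus f (fun _ => c) u v Ex (ex_RInt_const u v c)).
    rewrite RInt_const in H. unfold minus, plus, opp in H; simpl in H.
    unfold scal in H; simpl in H. unfold mult in H; simpl in H.
    change (RInt f u v - (v - u) * c = RInt (fun x => f x + - c) u v). rewrite H. ring. }
  rewrite E. apply abs_RInt_le_const; auto.
  apply (ex_RInt_minus f (fun _ => c)); auto. apply ex_RInt_const. }
destruct (Rle_or_lt u v) as [L|L].
- rewrite Rmin_left, Rmax_right in Hb by lra. rewrite (Rabs_pos_eq (v - u)) by lra. apply K; auto.
- rewrite Rmin_right, Rmax_left in Hb by lra.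
  rewrite <- opp_RInt_swap.
  + replace (opp (RInt f v u) - (v - u) * c) with (- (RInt f v u - (u - v) * c))
      by (unfold opp; simpl; ring).
    rewrite Rabs_Ropp, (Rabs_left (v - u)) by lra. replace (- (v - u)) with (u - v) by ring.
    apply K; auto; lra.
  + apply (ex_RInt_in lo hi); auto.
Qed.

Lemma RInt_diff lo hi f u v : lo <= hi -> Cont1 lo hi f -> lo <= u <= hi -> lo <= v <= hi ->
  RInt f lo v - RInt f lo u = RInt f u v.
Proof.
intros. rewrite <- (RInt_Chasles f lo u v).
- unfold plus; simpl; ring.
- apply (ex_RInt_in lo hi); auto; lra.
- apply (ex_RInt_in lo hi); auto.
Qed.

Lemma exists_near lo hi x d : lo < hi -> lo <= x <= hi -> 0 < d ->
  exists y, lo <= y <= hi /\ y <> x /\ Rabs (y - x) < d.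
Proof.
intros Hlh Hx Hd. destruct (Rlt_or_le x hi) as [L|L].
- exists (x + Rmin d (hi - x) / 2).
  assert (0 < Rmin d (hi - x)) by (apply Rmin_pos; lra).
  assert (Rmin d (hi - x) <= d) by apply Rmin_l.
  assert (Rmin d (hi - x) <= hi - x) by apply Rmin_r.
  split. lra. split. lra. rewrite Rabs_pos_eq; lra.
- exists (x - Rmin d (x - lo) / 2).
  assert (0 < Rmin d (x - lo)) by (apply Rmin_pos; lra).
  assert (Rmin d (x - lo) <= d) by apply Rmin_l.
  assert (Rmin d (x - lo) <= x - lo) by apply Rmin_r.
  split. lra. split. lra. rewrite Rabs_minus_sym, Rabs_pos_eq; lra.
Qed.

Lemma eq_of_small u v K : 0 <= K -> (forall e, 0 < e -> Rabs (u - v) <= K * e) -> u = v.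
Proof.
intros HK H. apply NNPP. intro N.
assert (P : 0 < Rabs (u - v)) by (apply Rabs_pos_lt; lra).
specialize (H (Rabs (u - v) / (2 * (K + 1)))).
assert (0 < Rabs (u - v) / (2 * (K + 1))) by (apply Rdiv_lt_0_compat; lra).
specialize (H H0).
assert (K * (Rabs (u - v) / (2 * (K + 1))) < Rabs (u - v)).
{ unfold Rdiv. rewrite <- Rmult_assoc.
  apply (Rmult_lt_reg_r (2 * (K + 1))). lra.
  rewrite Rmult_assoc, Rinv_l by lra. nra. }
lra.
Qed.

Lemma DerIn_const lo hi c x : DerIn lo hi (fun _ => c) x 0.
Proof.
unfold DerIn. eapply Lim_ext; [|apply (Lim_const lo hi 0 x)].
intros y _ Hy. simpl. field. lra.
Qed.

Lemma FTC lo hi f x : lo <= hi -> Cont1 lo hi f -> lo <= x <= hi ->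
  DerIn lo hi (fun y => RInt f lo y) x (f x).
Proof.
intros Hlh Hf Hx e He.
destruct (Hf x Hx (e / 2) ltac:(lra)) as [d [Hd Hd']].
exists d. split; auto. intros y Hy Hyx Hyd.
rewrite (RInt_diff lo hi f x y) by auto.
assert (B := RInt_approx lo hi f x y (f x) (e / 2) Hlh Hf Hx Hy).
assert (Hb : forall z, Rmin x y <= z <= Rmax x y -> Rabs (f z - f x) <= e / 2).
{ intros z Hz. apply Rlt_le. apply Hd'.
  - unfold Rmin, Rmax in Hz. destruct Rle_dec; lra.
  - unfold Rmin, Rmax in Hz. destruct Rle_dec; split_Rabs; lra. }
specialize (B Hb).
assert (Hyx' : 0 < Rabs (y - x)) by (apply Rabs_pos_lt; lra).
replace (RInt f x y / (y - x) - f x) with ((RInt f x y - (y - x) * f x) / (y - x)) by (field; lra).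
unfold Rdiv. rewrite Rabs_mult, Rabs_inv.
apply (Rmult_lt_reg_r (Rabs (y - x))). auto.
rewrite Rmult_assoc, Rinv_l by lra. nra.
Qed.

Lemma between_abs u v z : Rmin u v <= z <= Rmax u v -> Rabs (z - u) <= Rabs (v - u).
Proof. unfold Rmin, Rmax. destruct Rle_dec; split_Rabs; lra. Qed.

Lemma between_in lo hi u v z : lo <= u <= hi -> lo <= v <= hi -> Rmin u v <= z <= Rmax u v -> lo <= z <= hi.
Proof. unfold Rmin, Rmax. destruct Rle_dec; lra. Qed.

Lemma prod_bound a b A B : Rabs a <= A -> Rabs b <= B -> Rabs (a * b) <= A * B.
Proof. intros. rewrite Rabs_mult. apply Rmult_le_compat; auto; apply Rabs_pos. Qed.

Lemma chain T f ft fx y y' s : 0 < T -> Cont2 T ft -> Cont2 T fx ->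
  (forall t x, Rect T (t, x) -> DerIn 0 T (fun r => f r x) t (ft t x)) ->
  (forall t x, Rect T (t, x) -> DerIn (- PI) PI (fun z => f t z) x (fx t x)) ->
  (forall r, 0 <= r <= T -> - PI <= y r <= PI) ->
  0 <= s <= T -> DerIn 0 T y s (y' s) ->
  DerIn 0 T (fun r => f r (y r)) s (ft s (y s) + y' s * fx s (y s)).
Proof.
intros HT Hft Hfx Dt Dx Hy Hs Dy e He.
set (p := y' s) in *. set (F := fx s (y s)).
assert (HpF : 0 <= Rabs p /\ 0 <= Rabs F) by (split; apply Rabs_pos).
set (eq := Rmin 1 (e / (3 * (Rabs F + 1)))).
assert (Heq : 0 < eq) by (apply Rmin_pos; [lra | apply Rdiv_lt_0_compat; lra]).
destruct (Dy eq Heq) as [dq [Hdq Hdq']].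
assert (Rys : Rect T (s, y s)) by (split; simpl; auto).
destruct (Hft s (y s) Rys (e / 3) ltac:(lra)) as [d1 [Hd1 Hd1']].
assert (He2 : 0 < e / (3 * (Rabs p + 1))) by (apply Rdiv_lt_0_compat; lra).
destruct (Hfx s (y s) Rys _ He2) as [d2 [Hd2 Hd2']].
destruct (DerIn_cont _ _ _ _ _ Dy (Rmin d1 d2) ltac:(apply Rmin_pos; lra)) as [dy [Hdy Hdy']].
exists (Rmin dq (Rmin d1 dy)). split. repeat apply Rmin_pos; lra.
intros r Hr Hrs Hrd.
assert (Rmin dq (Rmin d1 dy) <= dq) by apply Rmin_l.
assert (Rmin dq (Rmin d1 dy) <= Rmin d1 dy) by apply Rmin_r.
assert (Rmin d1 dy <= d1) by apply Rmin_l.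
assert (Rmin d1 dy <= dy) by apply Rmin_r.
assert (Rmin d1 d2 <= d1) by apply Rmin_l.
assert (Rmin d1 d2 <= d2) by apply Rmin_r.
assert (Hyr : - PI <= y r <= PI) by auto.
assert (Hys : - PI <= y s <= PI) by auto.
destruct (MVT_in 0 T (fun r' => f r' (y r)) (fun r' => ft r' (y r)) s r Hs Hr) as [tau [Htau Etau]].
{ intros z Hz. apply Dt. split; simpl; auto. apply (between_in 0 T s r z); auto. }
destruct (MVT_in (- PI) PI (fun z => f s z) (fun z => fx s z) (y s) (y r) Hys Hyr) as [eta [Heta Eeta]].
{ intros z Hz. apply Dx. split; simpl; auto. apply (between_in (- PI) PI (y s) (y r) z); auto. }
simpl in Etau, Eeta.
set (q := (y r - y s) / (r - s)).
assert (Hq : Rabs (q - p) < eq) by (apply Hdq'; auto; lra).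
assert (eq <= 1) by apply Rmin_l.
assert (eq <= e / (3 * (Rabs F + 1))) by apply Rmin_r.
assert (Hyrs : Rabs (y r - y s) < Rmin d1 d2) by (apply Hdy'; auto; lra).
assert (Htau' : Rabs (tau - s) <= Rabs (r - s)) by (apply between_abs; auto).
assert (Heta' : Rabs (eta - y s) <= Rabs (y r - y s)) by (apply between_abs; auto).
assert (B1 : Rabs (ft tau (y r) - ft s (y s)) < e / 3).
{ apply Hd1'. split; simpl; auto. apply (between_in 0 T s r tau); auto. lra. lra. }
assert (B2 : Rabs (fx s eta - F) < e / (3 * (Rabs p + 1))).
{ apply Hd2'. split; simpl; auto. apply (between_in (- PI) PI (y s) (y r) eta); auto.
  rewrite Rminus_eq_0, Rabs_R0; lra. lra. }
assert (Eq : (f r (y r) - f s (y s)) / (r - s) = ft tau (y r) + fx s eta * q).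
{ unfold q. replace (f r (y r) - f s (y s)) with ((f r (y r) - f s (y r)) + (f s (y r) - f s (y s))) by ring.
  rewrite Etau, Eeta. field. lra. }
rewrite Eq.
assert (Hqb : Rabs q <= Rabs p + 1).
{ replace q with ((q - p) + p) by ring. eapply Rle_trans. apply Rabs_triang. lra. }
assert (B3 : Rabs ((fx s eta - F) * q) <= e / (3 * (Rabs p + 1)) * (Rabs p + 1)).
{ apply prod_bound; lra. }
replace (e / (3 * (Rabs p + 1)) * (Rabs p + 1)) with (e / 3) in B3 by (field; lra).
assert (B4 : Rabs (F * (q - p)) <= Rabs F * (e / (3 * (Rabs F + 1)))).
{ apply prod_bound; lra. }
assert (Rabs F * (e / (3 * (Rabs F + 1))) <= e / 3).
{ replace (Rabs F * (e / (3 * (Rabs F + 1)))) with ((e / 3) * (Rabs F / (Rabs F + 1))) by (field; lra).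
  assert (Rabs F / (Rabs F + 1) <= 1).
  { apply (Rmult_le_reg_r (Rabs F + 1)). lra. unfold Rdiv. rewrite Rmult_assoc, Rinv_l by lra. lra. }
  nra. }
replace (ft tau (y r) + fx s eta * q - (ft s (y s) + p * F))
  with ((ft tau (y r) - ft s (y s)) + ((fx s eta - F) * q + F * (q - p))) by (unfold F; ring).
eapply Rle_lt_trans. apply Rabs_triang.
assert (Rabs ((fx s eta - F) * q + F * (q - p)) <= Rabs ((fx s eta - F) * q) + Rabs (F * (q - p))) by apply Rabs_triang.
lra.
Qed.

Lemma clairaut T f ft fx ftx fxt t x : 0 < T -> Cont2 T ftx -> Cont2 T fxt ->
  (forall t x, Rect T (t, x) -> DerIn 0 T (fun r => f r x) t (ft t x)) ->
  (forall t x, Rect T (t, x) -> DerIn (- PI) PI (fun z => f t z) x (fx t x)) ->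
  (forall t x, Rect T (t, x) -> DerIn (- PI) PI (fun z => ft t z) x (ftx t x)) ->
  (forall t x, Rect T (t, x) -> DerIn 0 T (fun r => fx r x) t (fxt t x)) ->
  Rect T (t, x) -> ftx t x = fxt t x.
Proof.
intros HT C1 C2 Dt Dx Dtx Dxt Rtx.
assert (HPI := PI_RGT_0).
destruct Rtx as [Ht Hx]; simpl in Ht, Hx.
apply (eq_of_small _ _ 2). lra. intros e He.
destruct (C1 t x (conj Ht Hx) e He) as [d1 [Hd1 Hd1']].
destruct (C2 t x (conj Ht Hx) e He) as [d2 [Hd2 Hd2']].
assert (Hd : 0 < Rmin d1 d2) by (apply Rmin_pos; lra).
assert (Rmin d1 d2 <= d1) by apply Rmin_l. assert (Rmin d1 d2 <= d2) by apply Rmin_r.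
destruct (exists_near 0 T t _ HT Ht Hd) as [t' [Ht' [Htt' Htd]]].
destruct (exists_near (- PI) PI x _ ltac:(lra) Hx Hd) as [x' [Hx' [Hxx' Hxd]]].
destruct (MVT_in 0 T (fun r => f r x' - f r x) (fun r => ft r x' - ft r x) t t' Ht Ht') as [tau [Htau E1]].
{ intros z Hz. assert (0 <= z <= T) by (apply (between_in 0 T t t' z); auto).
  apply DerIn_minus; apply Dt; split; simpl; auto. }
destruct (MVT_in (- PI) PI (fun z => ft tau z) (fun z => ftx tau z) x x' Hx Hx') as [xi [Hxi E2]].
{ intros z Hz. assert (- PI <= z <= PI) by (apply (between_in (- PI) PI x x' z); auto).
  apply Dtx; split; simpl; auto. apply (between_in 0 T t t' tau); auto. }
destruct (MVT_in (- PI) PI (fun z => f t' z - f t z) (fun z => fx t' z - fx t z) x x' Hx Hx') as [xi' [Hxi' E3]].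
{ intros z Hz. assert (- PI <= z <= PI) by (apply (between_in (- PI) PI x x' z); auto).
  apply DerIn_minus; apply Dx; split; simpl; auto. }
destruct (MVT_in 0 T (fun r => fx r xi') (fun r => fxt r xi') t t' Ht Ht') as [tau' [Htau' E4]].
{ intros z Hz. assert (0 <= z <= T) by (apply (between_in 0 T t t' z); auto).
  apply Dxt; split; simpl; auto. apply (between_in (- PI) PI x x' xi'); auto. }
simpl in E1, E2, E3, E4.
assert (Eq : ftx tau xi = fxt tau' xi').
{ assert (Nz : (x' - x) * (t' - t) <> 0).
  { apply Rmult_integral_contrapositive. split; lra. }
  apply (Rmult_eq_reg_r ((x' - x) * (t' - t))); auto.
  transitivity ((f t' x' - f t' x) - (f t x' - f t x)).
  - rewrite E1, E2. ring.
  - replace ((f t' x' - f t' x) - (f t x' - f t x)) with ((f t' x' - f t x') - (f t' x - f t x)) by ring.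
    rewrite E3. rewrite E4. ring. }
assert (A1 : Rabs (ftx tau xi - ftx t x) < e).
{ apply Hd1'.
  - split; simpl. apply (between_in 0 T t t' tau); auto. apply (between_in (- PI) PI x x' xi); auto.
  - assert (Rabs (tau - t) <= Rabs (t' - t)) by (apply between_abs; auto). lra.
  - assert (Rabs (xi - x) <= Rabs (x' - x)) by (apply between_abs; auto). lra. }
assert (A2 : Rabs (fxt tau' xi' - fxt t x) < e).
{ apply Hd2'.
  - split; simpl. apply (between_in 0 T t t' tau'); auto. apply (between_in (- PI) PI x x' xi'); auto.
  - assert (Rabs (tau' - t) <= Rabs (t' - t)) by (apply between_abs; auto). lra.
  - assert (Rabs (xi' - x) <= Rabs (x' - x)) by (apply between_abs; auto). lra. }
rewrite Eq in A1.
replace (ftx t x - fxt t x) with (- (fxt tau' xi' - ftx t x) + (fxt tau' xi' - fxt t x)) by ring.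
eapply Rle_trans. apply Rabs_triang. rewrite Rabs_Ropp. lra.
Qed.

Lemma DerIn_exp lo hi c s : DerIn lo hi (fun y => exp (c * y)) s (c * exp (c * s)).
Proof.
apply DerIn_of_derivable. apply is_derive_Reals. auto_derive. auto. ring.
Qed.

Lemma gron_aux T f f' M c t : 0 < T -> 0 <= M ->
  (forall s, 0 <= s <= T -> DerIn 0 T f s (f' s)) ->
  (forall s, 0 <= s <= T -> f s * f' s * 2 + c * (f s * f s) <= 0) ->
  0 <= t <= T -> f t * f t * exp (c * t) <= f 0 * f 0.
Proof.
intros HT HM Df Hb Ht.
set (g := fun y => f y * f y * exp (c * y)).
assert (Dg : forall s, 0 <= s <= T -> DerIn 0 T g s
   ((f s * f s) * (c * exp (c * s)) + exp (c * s) * (f s * f' s + f s * f' s))).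
{ intros s Hs. unfold g.
  apply (DerIn_mult 0 T (fun y => f y * f y) (fun y => exp (c * y))).
  apply DerIn_mult; auto. apply DerIn_exp. }
destruct (MVT_in 0 T g (fun s => (f s * f s) * (c * exp (c * s)) + exp (c * s) * (f s * f' s + f s * f' s)) 0 t ltac:(lra) Ht) as [tau [Htau E]].
{ intros z Hz. apply Dg. apply (between_in 0 T 0 t z); auto; lra. }
assert (Htau' : 0 <= tau <= T) by (apply (between_in 0 T 0 t tau); auto; lra).
unfold g in E. replace (c * 0) with 0 in E by ring. rewrite exp_0 in E.
assert (Hneg : f tau * f tau * (c * exp (c * tau)) + exp (c * tau) * (f tau * f' tau + f tau * f' tau) <= 0).
{ replace (f tau * f tau * (c * exp (c * tau)) + exp (c * tau) * (f tau * f' tau + f tau * f' tau))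
   with (exp (c * tau) * (f tau * f' tau * 2 + c * (f tau * f tau))) by ring.
  assert (0 < exp (c * tau)) by apply exp_pos.
  specialize (Hb tau Htau'). nra. }
nra.
Qed.

Lemma gronwall T f f' M : 0 < T -> 0 <= M ->
  (forall s, 0 <= s <= T -> DerIn 0 T f s (f' s)) ->
  (forall s, 0 <= s <= T -> Rabs (f' s) <= M * Rabs (f s)) ->
  forall t, 0 <= t <= T ->
    f t * f t * exp (- (2 * M) * t) <= f 0 * f 0 /\
    f 0 * f 0 <= f t * f t * exp (2 * M * t).
Proof.
intros HT HM Df Hb t Ht.
assert (K : forall s, 0 <= s <= T -> Rabs (f s * f' s * 2) <= 2 * M * (f s * f s)).
{ intros s Hs. rewrite !Rabs_mult. rewrite (Rabs_pos_eq 2) by lra.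
  specialize (Hb s Hs).
  assert (0 <= Rabs (f s)) by apply Rabs_pos.
  assert (Rabs (f s) * Rabs (f s) = f s * f s) by (rewrite <- Rabs_mult; apply Rabs_pos_eq; nra).
  nra. }
split.
- apply (gron_aux T f f' M); auto.
  intros s Hs. specialize (K s Hs). apply Rabs_le_between in K. lra.
-
  set (fr := fun y => f (t - y)).
  assert (Ht0 : 0 < t \/ t = 0) by lra.
  destruct Ht0 as [Htp|Ht0].
  2:{ subst t. rewrite Rmult_0_r, exp_0. lra. }
  assert (Dfr : forall s, 0 <= s <= t -> DerIn 0 t fr s (- f' (t - s))).
  { intros s Hs e He. destruct (Df (t - s) ltac:(lra) e He) as [d [Hd Hd']].
    exists d. split; auto. intros y Hy Hys Hyd.
    unfold fr. replace ((f (t - y) - f (t - s)) / (y - s) - - f' (t - s)) with (- ((f (t - y) - f (t - s)) / ((t - y) - (t - s)) - f' (t - s))) by (field; lra). rewrite Rabs_Ropp.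
    apply Hd'. lra. lra. replace (t - y - (t - s)) with (- (y - s)) by ring. rewrite Rabs_Ropp. auto. }
  assert (Hr := gron_aux t fr (fun s => - f' (t - s)) M (- (2 * M)) t Htp HM Dfr).
  assert (Hr2 : fr t * fr t * exp (- (2 * M) * t) <= fr 0 * fr 0).
  { apply Hr. 2: lra. intros s Hs. specialize (K (t - s) ltac:(lra)). apply Rabs_le_between in K.
    unfold fr. lra. }
  unfold fr in Hr2. replace (t - t) with 0 in Hr2 by ring. replace (t - 0) with t in Hr2 by ring.
  assert (0 < exp (2 * M * t)) by apply exp_pos.
  assert (Ee : exp (- (2 * M) * t) * exp (2 * M * t) = 1).
  { rewrite <- exp_plus. replace (- (2 * M) * t + 2 * M * t) with 0 by ring. apply exp_0. }
  assert (f 0 * f 0 = f 0 * f 0 * exp (- (2 * M) * t) * exp (2 * M * t)).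
  { rewrite Rmult_assoc, Ee. ring. }
  rewrite H0. apply Rmult_le_compat_r; lra.
Qed.

Lemma sq_le x y : 0 <= y -> x * x <= y * y -> x <= y.
Proof. intros. nra. Qed.

Lemma gron_lower f0 fs M s T : 0 <= f0 -> 0 <= fs -> 0 <= M -> 0 <= s <= T ->
  f0 * f0 <= fs * fs * exp (2 * M * s) -> f0 * exp (- M * T) <= fs.
Proof.
intros H0 Hs HM Hst H. apply sq_le; auto.
set (L := exp (- M * T)).
assert (HL : L * L * exp (2 * M * T) = 1).
{ unfold L. rewrite <- !exp_plus. replace (- M * T + - M * T + 2 * M * T) with 0 by ring. apply exp_0. }
assert (Hle : exp (2 * M * s) <= exp (2 * M * T)).
{ assert (2 * M * s <= 2 * M * T) by nra.
  destruct (Req_dec (2 * M * s) (2 * M * T)) as [E|N]. rewrite E; lra. apply Rlt_le, exp_increasing. lra. }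
assert (0 < L) by apply exp_pos.
assert (f0 * L * (f0 * L) = (f0 * f0) * (L * L)) by ring.
assert (f0 * f0 * (L * L) <= fs * fs * exp (2 * M * s) * (L * L)) by (apply Rmult_le_compat_r; nra).
assert (fs * fs * exp (2 * M * s) * (L * L) <= fs * fs * exp (2 * M * T) * (L * L)).
{ apply Rmult_le_compat_r. nra. apply Rmult_le_compat_l. nra. auto. }
assert (fs * fs * exp (2 * M * T) * (L * L) = fs * fs * (L * L * exp (2 * M * T))) by ring.
rewrite HL, Rmult_1_r in H5.
lra.
Qed.

Theorem lemma2p5 (T : R) (a at_ ax att atx axt axx : R -> R -> R)
  (xs : R -> R) (x0 : R) :
  0 < T ->
  C2_rect T a at_ ax att atx axt axx ->
  (* the PDE on [0,T] x [-pi,pi] *)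
  (forall t x, Rect T (t, x) ->
     at_ t x + RInt (fun y => a t y) (- PI) x * ax t x - (a t x) ^ 2
       + / PI * RInt (fun y => (a t y) ^ 2) (- PI) PI = 0) ->
  (* zero mean *)
  (forall t, 0 <= t <= T -> RInt (fun y => a t y) (- PI) PI = 0) ->
  (* critical point of a_0 *)
  - PI <= x0 <= PI ->
  ax 0 x0 = 0 ->
  (* xs is the characteristic starting from x0 *)
  xs 0 = x0 ->
  (forall t, 0 <= t <= T -> - PI <= xs t <= PI) ->
  (forall t, 0 <= t <= T ->
     is_derive_in (Icc 0 T) xs t (RInt (fun y => a t y) (- PI) (xs t))) ->
  forall t, 0 <= t <= T -> axx t (xs t) = axx 0 x0.
Proof.
intros HT HC HPDE Hmean Hx0 Hax0 Hxs0 Hxsr Hxsd t1 Ht1.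
assert (HPI := PI_RGT_0).
destruct HC as [Ca [Cat [Cax [Catt [Catx [Caxt [Caxx Hder]]]]]]].
apply cont_on2_Cont2 in Ca, Cat, Cax, Catx, Caxt, Caxx.
assert (Dat : forall t x, Rect T (t, x) -> DerIn 0 T (fun s => a s x) t (at_ t x))
  by (intros t x R; apply DerIn_equiv, (Hder t x R)).
assert (Dax : forall t x, Rect T (t, x) -> DerIn (- PI) PI (fun y => a t y) x (ax t x))
  by (intros t x R; apply DerIn_equiv, (Hder t x R)).
assert (Datx : forall t x, Rect T (t, x) -> DerIn (- PI) PI (fun y => at_ t y) x (atx t x))
  by (intros t x R; apply DerIn_equiv, (Hder t x R)).
assert (Daxt : forall t x, Rect T (t, x) -> DerIn 0 T (fun s => ax s x) t (axt t x))
  by (intros t x R; apply DerIn_equiv, (Hder t x R)).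
assert (Daxx : forall t x, Rect T (t, x) -> DerIn (- PI) PI (fun y => ax t y) x (axx t x))
  by (intros t x R; apply DerIn_equiv, (Hder t x R)).
clear Hder.
assert (Ca1 : forall s, 0 <= s <= T -> Cont1 (- PI) PI (fun y => a s y)).
{ intros s Hs x Hx e He. destruct (Ca s x (conj Hs Hx) e He) as [d [Hd Hd']].
  exists d. split; auto. intros y Hy Hyd. apply Hd'; auto. split; auto.
  rewrite Rminus_eq_0, Rabs_R0. lra. }
set (A := fun s y => RInt (fun z => a s z) (- PI) y).
assert (Dxs : forall s, 0 <= s <= T -> DerIn 0 T xs s (A s (xs s)))
  by (intros s Hs; apply DerIn_equiv, (Hxsd s Hs)).
(* differentiated PDE *)
assert (F2 : forall s y, Rect T (s, y) -> atx s y + A s y * axx s y - a s y * ax s y = 0).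
{ intros s y Rsy. destruct Rsy as [Hs Hy]; simpl in Hs, Hy.
  set (c := / PI * RInt (fun y => (a s y) ^ 2) (- PI) PI).
  assert (D1 := DerIn_plus _ _ _ _ _ _ _
     (DerIn_minus _ _ _ _ _ _ _
        (DerIn_plus _ _ _ _ _ _ _ (Datx s y (conj Hs Hy))
           (DerIn_mult _ _ _ _ _ _ _ (FTC (- PI) PI (fun z => a s z) y ltac:(lra) (Ca1 s Hs) Hy)
              (Daxx s y (conj Hs Hy))))
        (DerIn_mult _ _ _ _ _ _ _ (Dax s y (conj Hs Hy)) (Dax s y (conj Hs Hy))))
     (DerIn_const (- PI) PI c y)).
  assert (Z : forall z, - PI <= z <= PI ->
     at_ s z + RInt (fun z => a s z) (- PI) z * ax s z - a s z * a s z + c = 0).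
  { intros z Hz. rewrite <- (HPDE s z (conj Hs Hz)). unfold c. ring. }
  assert (D0 : DerIn (- PI) PI (fun z => at_ s z + RInt (fun z => a s z) (- PI) z * ax s z - a s z * a s z + c) y 0).
  { unfold DerIn. eapply Lim_ext; [|apply (Lim_const (- PI) PI 0 y)].
    intros z Hz Hzy. rewrite (Z z Hz), (Z y Hy). field. lra. }
  assert (E := Lim_unique (- PI) PI _ y _ _ ltac:(lra) Hy D1 D0).
  unfold A. lra. }
assert (Hcl : forall s y, Rect T (s, y) -> atx s y = axt s y).
{ intros s y R. apply (clairaut T a at_ ax atx axt s y HT Catx Caxt Dat Dax Datx Daxt R). }
destruct (Bound2 T a Ca) as [Ma HMa].
destruct (Bound2 T axx Caxx) as [Mx HMx].
assert (R00 : Rect T (0, 0)) by (split; simpl; lra).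
assert (HMa0 : 0 <= Ma) by (specialize (HMa 0 0 R00); assert (0 <= Rabs (a 0 0)) by apply Rabs_pos; lra).
assert (HMx0 : 0 <= Mx) by (specialize (HMx 0 0 R00); assert (0 <= Rabs (axx 0 0)) by apply Rabs_pos; lra).
assert (W0 : forall s, 0 <= s <= T -> ax s (xs s) = 0).
{ assert (Dw : forall s, 0 <= s <= T -> DerIn 0 T (fun r => ax r (xs r)) s (a s (xs s) * ax s (xs s))).
  { intros s Hs.
    assert (D := chain T ax axt axx xs (fun r => A r (xs r)) s HT Caxt Caxx Daxt Daxx Hxsr Hs (Dxs s Hs)).
    assert (Rs : Rect T (s, xs s)) by (split; simpl; auto).
    replace (a s (xs s) * ax s (xs s)) with (axt s (xs s) + A s (xs s) * axx s (xs s)); auto.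
    rewrite <- (Hcl s (xs s) Rs). specialize (F2 s (xs s) Rs). lra. }
  intros s Hs.
  destruct (gronwall T (fun r => ax r (xs r)) (fun r => a r (xs r) * ax r (xs r)) Ma HT HMa0 Dw) with (t := s)
    as [G1 _]; auto.
  { intros r Hr. rewrite Rabs_mult. apply Rmult_le_compat_r. apply Rabs_pos. apply HMa. split; simpl; auto. }
  simpl in G1. rewrite Hxs0, Hax0 in G1.
  assert (0 < exp (- (2 * Ma) * s)) by apply exp_pos.
  assert (ax s (xs s) * ax s (xs s) <= 0).
  { apply (Rmult_le_reg_r (exp (- (2 * Ma) * s))); auto. lra. }
  nra. }
assert (Bnd : forall s, 0 <= s <= T ->
   Rabs (A s (xs s)) <= Ma * (PI - xs s) /\ Rabs (A s (xs s)) <= Ma * (xs s + PI)).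
{ intros s Hs. assert (Hx := Hxsr s Hs).
  assert (Hb : forall z, Rmin (xs s) PI <= z <= Rmax (xs s) PI -> Rabs (a s z - 0) <= Ma).
  { intros z Hz. rewrite Rminus_0_r. apply HMa. split; simpl; auto.
    apply (between_in (- PI) PI (xs s) PI z); auto; lra. }
  assert (Hb2 : forall z, Rmin (- PI) (xs s) <= z <= Rmax (- PI) (xs s) -> Rabs (a s z - 0) <= Ma).
  { intros z Hz. rewrite Rminus_0_r. apply HMa. split; simpl; auto.
    apply (between_in (- PI) PI (- PI) (xs s) z); auto; lra. }
  assert (B1 := RInt_approx (- PI) PI (fun z => a s z) (xs s) PI 0 Ma ltac:(lra) (Ca1 s Hs) Hx ltac:(lra) Hb).
  assert (B2 := RInt_approx (- PI) PI (fun z => a s z) (- PI) (xs s) 0 Ma ltac:(lra) (Ca1 s Hs) ltac:(lra) Hx Hb2).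
  rewrite Rmult_0_r, Rminus_0_r in B1, B2.
  rewrite <- (RInt_diff (- PI) PI (fun z => a s z) (xs s) PI ltac:(lra) (Ca1 s Hs) Hx ltac:(lra)) in B1.
  rewrite (Hmean s Hs) in B1. change (RInt (fun z => a s z) (- PI) (xs s)) with (A s (xs s)) in B1, B2.
  rewrite (Rabs_pos_eq (PI - xs s)) in B1 by lra. rewrite (Rabs_pos_eq (xs s - - PI)) in B2 by lra.
  replace (0 - A s (xs s)) with (- A s (xs s)) in B1 by ring. rewrite Rabs_Ropp in B1.
  split; nra. }
assert (Dd : forall s, 0 <= s <= T -> DerIn 0 T (fun r => PI - xs r) s (0 - A s (xs s))).
{ intros s Hs. apply DerIn_minus. apply DerIn_const. auto. }
assert (De : forall s, 0 <= s <= T -> DerIn 0 T (fun r => xs r + PI) s (A s (xs s) + 0)).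
{ intros s Hs. apply DerIn_plus. auto. apply DerIn_const. }
assert (Ld : forall s, 0 <= s <= T -> (PI - x0) * exp (- Ma * T) <= PI - xs s).
{ intros s Hs. assert (Hx := Hxsr s Hs).
  destruct (gronwall T _ _ Ma HT HMa0 Dd) with (t := s) as [_ G]; auto.
  { intros r Hr. rewrite Rminus_0_l, Rabs_Ropp. destruct (Bnd r Hr) as [B _].
    rewrite (Rabs_pos_eq (PI - xs r)). auto. specialize (Hxsr r Hr). lra. }
  rewrite Hxs0 in G. apply (gron_lower _ _ Ma s T); auto; lra. }
assert (Le : forall s, 0 <= s <= T -> (x0 + PI) * exp (- Ma * T) <= xs s + PI).
{ intros s Hs. assert (Hx := Hxsr s Hs).
  destruct (gronwall T _ _ Ma HT HMa0 De) with (t := s) as [_ G]; auto.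
  { intros r Hr. rewrite Rplus_0_r. destruct (Bnd r Hr) as [_ B].
    rewrite (Rabs_pos_eq (xs r + PI)). auto. specialize (Hxsr r Hr). lra. }
  rewrite Hxs0 in G. apply (gron_lower _ _ Ma s T); auto; lra. }
assert (Sg : exists sg rho, (sg = 1 \/ sg = -1) /\ 0 < rho /\
  forall k, 0 < k < rho -> forall s, 0 <= s <= T -> - PI <= xs s + sg * k <= PI).
{ assert (0 < exp (- Ma * T)) by apply exp_pos.
  destruct (Rlt_or_le x0 PI) as [L|L].
  - exists 1, ((PI - x0) * exp (- Ma * T)). split. auto. split. nra.
    intros k Hk s Hs. specialize (Ld s Hs). specialize (Hxsr s Hs). lra.
  - exists (-1), ((x0 + PI) * exp (- Ma * T)). split. auto. split. nra.
    intros k Hk s Hs. specialize (Le s Hs). specialize (Hxsr s Hs). lra. }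
clear Ld Le Dd De Bnd.
destruct Sg as [sg [rho [Hsg [Hrho Hk]]]].
apply (eq_of_small _ _ (2 + T * (2 * Mx + Ma))). nra.
intros e He.
destruct (UC T a Ca e He) as [da [Hda Hda']].
destruct (UC T axx Caxx e He) as [dx [Hdx Hdx']].
set (k := Rmin rho (Rmin da dx) / 2).
assert (Rmin rho (Rmin da dx) <= rho) by apply Rmin_l.
assert (Rmin rho (Rmin da dx) <= Rmin da dx) by apply Rmin_r.
assert (Rmin da dx <= da) by apply Rmin_l.
assert (Rmin da dx <= dx) by apply Rmin_r.
assert (0 < Rmin rho (Rmin da dx)) by (repeat apply Rmin_pos; lra).
assert (Hk0 : 0 < k /\ k < rho /\ k < da /\ k < dx) by (unfold k; lra).
set (h := sg * k).
assert (Hh : Rabs h = k) by (unfold h; destruct Hsg as [E|E]; rewrite E;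
  [rewrite Rmult_1_l | replace (-1 * k) with (- k) by ring; rewrite Rabs_Ropp]; apply Rabs_pos_eq; lra).
assert (Hy : forall s, 0 <= s <= T -> - PI <= xs s + h <= PI) by (intros; apply Hk; auto; lra).
assert (DG : forall s, 0 <= s <= T -> DerIn 0 T (fun r => ax r (xs r + h)) s
   (axt s (xs s + h) + (A s (xs s) + 0) * axx s (xs s + h))).
{ intros s Hs.
  apply (chain T ax axt axx (fun r => xs r + h) (fun r => A r (xs r) + 0) s HT Caxt Caxx Daxt Daxx Hy Hs).
  apply DerIn_plus. auto. apply DerIn_const. }
assert (Repr : forall s, 0 <= s <= T -> exists eta, Rabs (eta - (xs s + h)) <= k /\ Rabs (eta - xs s) <= k /\
   - PI <= eta <= PI /\ ax s (xs s + h) = h * axx s eta).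
{ intros s Hs. assert (Hx := Hxsr s Hs). assert (Hys := Hy s Hs).
  destruct (MVT_in (- PI) PI (fun z => ax s z) (fun z => axx s z) (xs s) (xs s + h) Hx Hys) as [eta [Heta E]].
  { intros z Hz. apply Daxx. split; simpl; auto. apply (between_in (- PI) PI (xs s) (xs s + h) z); auto. }
  exists eta. split; [|split; [|split]].
  - assert (Rabs (eta - (xs s + h)) <= Rabs (xs s - (xs s + h))).
    { apply between_abs. rewrite Rmin_comm, Rmax_comm. auto. }
    replace (xs s - (xs s + h)) with (- h) in H4 by ring. rewrite Rabs_Ropp in H4. lra.
  - assert (Rabs (eta - xs s) <= Rabs (xs s + h - xs s)) by (apply between_abs; auto).
    replace (xs s + h - xs s) with h in H4 by ring. lra.
  - apply (between_in (- PI) PI (xs s) (xs s + h) eta); auto.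
  - simpl in E. rewrite (W0 s Hs) in E. lra. }
assert (Bd : forall s, 0 <= s <= T ->
   Rabs (axt s (xs s + h) + (A s (xs s) + 0) * axx s (xs s + h)) <= k * (e * (2 * Mx + Ma))).
{ intros s Hs. assert (Hx := Hxsr s Hs). assert (Hys := Hy s Hs).
  set (y := xs s + h) in *.
  assert (Rs : Rect T (s, y)) by (split; simpl; auto).
  rewrite <- (Hcl s y Rs).
  assert (F := F2 s y Rs).
  destruct (Repr s Hs) as [eta [He1 [He2 [He3 Eeta]]]]. fold y in He1, Eeta.
  assert (Dif := RInt_diff (- PI) PI (fun z => a s z) (xs s) y ltac:(lra) (Ca1 s Hs) Hx Hys).
  change (A s y - A s (xs s) = RInt (fun z => a s z) (xs s) y) in Dif.
  assert (Ap := RInt_approx (- PI) PI (fun z => a s z) (xs s) y (a s (xs s)) e ltac:(lra) (Ca1 s Hs) Hx Hys).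
  assert (Hyx : y - xs s = h) by (unfold y; ring).
  rewrite Hyx, Hh in Ap.
  assert (Ap2 : Rabs (RInt (fun z => a s z) (xs s) y - h * a s (xs s)) <= k * e).
  { apply Ap. intros z Hz. apply Rlt_le. apply Hda'.
    - split; simpl; auto. apply (between_in (- PI) PI (xs s) y z); auto.
    - split; simpl; auto.
    - rewrite Rminus_eq_0, Rabs_R0. lra.
    - assert (Rabs (z - xs s) <= Rabs (y - xs s)) by (apply between_abs; auto).
      rewrite Hyx, Hh in H4. lra. }
  set (E := RInt (fun z => a s z) (xs s) y - h * a s (xs s)) in *.
  assert (Rxs : Rect T (s, xs s)) by (split; simpl; auto).
  assert (Reta : Rect T (s, eta)) by (split; simpl; auto).
  assert (B1 : Rabs (a s y - a s (xs s)) <= e).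
  { apply Rlt_le, Hda'; auto. rewrite Rminus_eq_0, Rabs_R0. lra. rewrite Hyx, Hh. lra. }
  assert (B2 : Rabs (axx s eta) <= Mx) by auto.
  assert (B3 : Rabs (a s (xs s)) <= Ma) by auto.
  assert (B4 : Rabs (axx s eta - axx s y) <= e).
  { apply Rlt_le, Hdx'; auto. rewrite Rminus_eq_0, Rabs_R0. lra. lra. }
  assert (B5 : Rabs (axx s y) <= Mx) by auto.
  assert (EQ : atx s y + (A s (xs s) + 0) * axx s y =
     h * ((a s y - a s (xs s)) * axx s eta + a s (xs s) * (axx s eta - axx s y)) - E * axx s y).
  { unfold E. rewrite <- Dif. replace (atx s y) with (a s y * ax s y - A s y * axx s y) by lra.
    rewrite Eeta. ring. }
  rewrite EQ.
  assert (C1 : Rabs ((a s y - a s (xs s)) * axx s eta) <= e * Mx) by (apply prod_bound; auto).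
  assert (C2 : Rabs (a s (xs s) * (axx s eta - axx s y)) <= Ma * e) by (apply prod_bound; auto).
  assert (C3 : Rabs (E * axx s y) <= (k * e) * Mx) by (apply prod_bound; auto).
  assert (C4 : Rabs ((a s y - a s (xs s)) * axx s eta + a s (xs s) * (axx s eta - axx s y)) <= e * Mx + Ma * e).
  { eapply Rle_trans. apply Rabs_triang. lra. }
  assert (C5 : Rabs (h * ((a s y - a s (xs s)) * axx s eta + a s (xs s) * (axx s eta - axx s y))) <= k * (e * Mx + Ma * e)).
  { rewrite Rabs_mult, Hh. apply Rmult_le_compat_l; lra. }
  unfold Rminus at 1. eapply Rle_trans. apply Rabs_triang. rewrite Rabs_Ropp. nra. }
destruct (MVT_in 0 T (fun r => ax r (xs r + h)) (fun s => axt s (xs s + h) + (A s (xs s) + 0) * axx s (xs s + h)) 0 t1 ltac:(lra) Ht1)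
  as [tau [Htau Et]].
{ intros z Hz. apply DG. apply (between_in 0 T 0 t1 z); auto; lra. }
assert (Htau' : 0 <= tau <= T) by (apply (between_in 0 T 0 t1 tau); auto; lra).
simpl in Et.
destruct (Repr t1 Ht1) as [eta1 [H11 [H12 [H13 E1]]]].
destruct (Repr 0 ltac:(lra)) as [eta0 [H01 [H02 [H03 E0]]]].
rewrite E1, E0 in Et. rewrite Hxs0 in H01, H02.
assert (Bt := Bd tau Htau').
assert (M1 : Rabs (h * (axx t1 eta1 - axx 0 eta0)) <= k * (e * (2 * Mx + Ma)) * T).
{ replace (h * (axx t1 eta1 - axx 0 eta0)) with (h * axx t1 eta1 - h * axx 0 eta0) by ring.
  rewrite Et, Rabs_mult. rewrite Rminus_0_r, (Rabs_pos_eq t1) by lra.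
  apply Rmult_le_compat; auto. apply Rabs_pos. lra. lra. }
rewrite Rabs_mult, Hh in M1.
assert (M2 : Rabs (axx t1 eta1 - axx 0 eta0) <= e * (2 * Mx + Ma) * T).
{ apply (Rmult_le_reg_l k). lra. lra. }
assert (M3 : Rabs (axx t1 eta1 - axx t1 (xs t1)) < e).
{ apply Hdx'. split; simpl; auto. split; simpl; auto. rewrite Rminus_eq_0, Rabs_R0. lra. lra. }
assert (M4 : Rabs (axx 0 eta0 - axx 0 x0) < e).
{ apply Hdx'. split; simpl; auto; lra. split; simpl; auto; lra. rewrite Rminus_eq_0, Rabs_R0. lra. lra. }
replace (axx t1 (xs t1) - axx 0 x0) with (- (axx t1 eta1 - axx t1 (xs t1)) + (axx t1 eta1 - axx 0 eta0) + (axx 0 eta0 - axx 0 x0)) by ring.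
eapply Rle_trans. apply Rabs_triang. eapply Rle_trans. apply Rplus_le_compat_r. apply Rabs_triang.
rewrite Rabs_Ropp. nra.
Qed.
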